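(* Let $\mathbf{y}\in\mathbb{R}^n$ and $\mathbf{X}=(\mathbf{x}_1,\ldots,\mathbf{x}_p)\in\mathbb{R}^{n\times p}$ satisfy $\sum_{i=1}^n y_i=0$, and for every $j=1,\ldots,p$, $\sum_{i=1}^n x_{ij}=0$ and $\frac1n\sum_{i=1}^n x_{ij}^2=1$. For $\lambda\ge 0$ let $$\widehat{\boldsymbol\beta}(\lambda)=\operatorname*{argmin}_{\boldsymbol\beta\in\mathbb{R}^p}\ \frac{1}{2n}\|\mathbf{y}-\mathbf{X}\boldsymbol\beta\|^2+\lambda\|\boldsymbol\beta\|_1 .$$ Let $\lambda_m=\max_j|\mathbf{x}_j^T\mathbf{y}/n|$ and let $\mathbf{x}_*=\operatorname*{argmax}_{\mathbf{x}_j}|\mathbf{x}_j^T\mathbf{y}|$. Then for any $\lambda\in(0,\lambda_m]$ and any $j$, we have $\widehat{\beta}_j(\lambda)=0$ if $$\left|(\lambda_m+\lambda)\mathbf{x}_j^T\mathbf{y}-(\lambda_m-\lambda)\,\mathrm{sign}(\mathbf{x}_*^T\mathbf{y})\,\lambda_m\,\mathbf{x}_j^T\mathbf{x}_*\right|<2n\lambda\lambda_m-(\lambda_m-\lambda)\sqrt{n\|\mathbf{y}\|^2-n^2\lambda_m^2}.$$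
   Context: $\|\cdot\|$ is the Euclidean norm and $\|\cdot\|_1$ the $\ell_1$ norm. $\widehat{\beta}_j(\lambda)$ denotes the $j$th coordinate of the lasso solution $\widehat{\boldsymbol\beta}(\lambda)$. *)

(* Defs.v *)
From HB Require Import structures.
From mathcomp Require Import all_boot all_order all_algebra.
From mathcomp Require Import reals.
Set Implicit Arguments. Unset Strict Implicit. Unset Printing Implicit Defensive.
Import Order.TTheory GRing.Theory Num.Theory.
Local Open Scope ring_scope.

Section Lasso.
Variable R : realType.
Variables n p : nat.

Definition sqnorm (m : nat) (v : 'cV[R]_m) : R := \sum_(i < m) (v i 0) ^+ 2.

Definition l1norm (m : nat) (v : 'cV[R]_m) : R := \sum_(i < m) `|v i 0|.

Definition xty (X : 'M[R]_(n, p)) (y : 'cV[R]_n) (j : 'I_p) : R :=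
  \sum_(i < n) X i j * y i 0.

Definition xtx (X : 'M[R]_(n, p)) (j k : 'I_p) : R :=
  \sum_(i < n) X i j * X i k.

Definition lasso_obj (X : 'M[R]_(n, p)) (y : 'cV[R]_n) (lam : R) (b : 'cV[R]_p) : R :=
  (2 * n%:R)^-1 * sqnorm (y - X *m b) + lam * l1norm b.

Definition is_lasso_sol (X : 'M[R]_(n, p)) (y : 'cV[R]_n) (lam : R) (b : 'cV[R]_p) : Prop :=
  forall b' : 'cV[R]_p, lasso_obj X y lam b <= lasso_obj X y lam b'.

Definition lambda_max (X : 'M[R]_(n, p)) (y : 'cV[R]_n) : R :=
  \big[Num.max/0]_(j < p) `|xty X y j / n%:R|.
End Lasso.

(* Main.v *)
Require Import Defs.
From HB Require Import structures.
From mathcomp Require Import all_boot all_order all_algebra.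
From mathcomp Require Import reals.
From mathcomp Require Import ring lra.
Import Order.TTheory GRing.Theory Num.Theory.
Local Open Scope ring_scope.

Section Aux.
Context {R : realType}.
Context {n : nat}.
Definition dotc (u v : 'cV[R]_n) : R := \sum_(i < n) u i 0 * v i 0.
Lemma dotcC u v : dotc u v = dotc v u.
Proof. by apply: eq_bigr => i _; rewrite mulrC. Qed.
Lemma dotcDl u v w : dotc (u + v) w = dotc u w + dotc v w.
Proof. by rewrite /dotc -big_split; apply: eq_bigr => i _; rewrite !mxE mulrDl. Qed.
Lemma dotcNl u w : dotc (- u) w = - dotc u w.
Proof. by rewrite /dotc -sumrN; apply: eq_bigr => i _; rewrite !mxE mulNr. Qed.
Lemma dotcZl c u w : dotc (c *: u) w = c * dotc u w.
Proof. by rewrite /dotc mulr_sumr; apply: eq_bigr => i _; rewrite !mxE mulrA. Qed.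
Lemma dotcDr u v w : dotc w (u + v) = dotc w u + dotc w v.
Proof. by rewrite dotcC dotcDl !(dotcC w). Qed.
Lemma dotcNr u w : dotc w (- u) = - dotc w u.
Proof. by rewrite dotcC dotcNl !(dotcC w). Qed.
Lemma dotcZr c u w : dotc w (c *: u) = c * dotc w u.
Proof. by rewrite dotcC dotcZl !(dotcC w). Qed.
Lemma sqnormE u : sqnorm u = dotc u u.
Proof. by apply: eq_bigr => i _; rewrite expr2. Qed.
Lemma dotc_ge0 u : 0 <= dotc u u.
Proof. by apply: sumr_ge0 => i _; rewrite -expr2 sqr_ge0. Qed.
Lemma cauchy_schwarz u v : 0 < dotc u u ->
  dotc u v ^+ 2 <= dotc u u * dotc v v.
Proof.
move=> hA.
set t := dotc u v / dotc u u.
have h := dotc_ge0 (v - t *: u).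
rewrite !dotcDl !dotcDr !dotcNl !dotcNr !dotcZl !dotcZr (dotcC v u) in h.
have h2 : 0 <= dotc u u * (dotc v v - t * dotc u v - (t * dotc u v - t * (t * dotc u u))).
  by apply: mulr_ge0; [exact: ltW | lra].
have -> : dotc u u * dotc v v = dotc u u * (dotc v v - t * dotc u v - (t * dotc u v - t * (t * dotc u u))) + dotc u v ^+ 2.
  rewrite /t. move: (dotc u u) (dotc u v) (dotc v v) (lt0r_neq0 hA) => A B C hA0.
  by field.
by rewrite lerDr.
Qed.
End Aux.

Lemma A_arith (R : realType) (n lam g bi : R) : 0 < n -> 0 < lam ->
  (forall t, 0 <= (2*n)^-1 * (t^+2 * n - 2*t*g) + lam*(`|bi+t| - `|bi|)) ->
  `|g| <= n*lam.
Proof.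
move=> hn hl H; rewrite leNgt; apply/negP => hg.
have n0 : n != 0 by rewrite gt_eqF.
have hN : forall t, `|bi + t| - `|bi| <= `|t|.
  by move=> t; rewrite lerBlDl ler_normD.
case: (lerP 0 g) => g0.
- rewrite ger0_norm // in hg.
  set t := g / n - lam.
  have tp : 0 < t by rewrite /t subr_gt0 ltr_pdivlMr // mulrC.
  have E : (2*n)^-1 * (t^+2 * n - 2*t*g) + lam*t = - (t^+2 / 2).
    by rewrite /t; field.
  have := H t; have := hN t; rewrite (gtr0_norm tp) => h1 h2.
  have h3 : 0 < t^+2 / 2 by rewrite divr_gt0 // exprn_gt0.
  have : lam * (`|bi + t| - `|bi|) <= lam * t by rewrite ler_wpM2l // ltW.
  lra.
- rewrite ltr0_norm // in hg.
  set t := g / n + lam.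
  have tp : t < 0.
    have : g / n < - lam by rewrite ltr_pdivrMr //; lra.
    rewrite /t; lra.
  have E : (2*n)^-1 * (t^+2 * n - 2*t*g) + lam*(-t) = - (t^+2 / 2).
    by rewrite /t; field.
  have := H t; have := hN t; rewrite (ltr0_norm tp) => h1 h2.
  have h3 : 0 < t^+2 / 2.
    by apply: divr_gt0 => //; rewrite expr2 nmulr_rgt0.
  have : lam * (`|bi + t| - `|bi|) <= lam * (-t) by rewrite ler_wpM2l // ltW.
  lra.
Qed.

Lemma lin_lemma (R : realType) (A B : R) : 0 <= B ->
  (forall u, 0 < u <= 1 -> 0 <= A + u * B) -> 0 <= A.
Proof.
move=> hB H; rewrite leNgt; apply/negP => hA.
set u := - A / (- A + B).
have hd : 0 < - A + B by lra.
have hu : 0 < u <= 1.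
  apply/andP; split; first by rewrite divr_gt0 // oppr_gt0.
  by rewrite ler_pdivrMr // mul1r; lra.
have := H u hu.
have -> : A + u * B = - (A ^+ 2) / (- A + B) by rewrite /u; field; rewrite gt_eqF.
rewrite leNgt => /negP; apply.
by rewrite mulNr oppr_lt0 divr_gt0 // expr2 nmulr_rgt0.
Qed.

Lemma C_arith (R : realType) (n lam g bi : R) : 0 < n -> 0 < lam -> bi != 0 ->
  (forall t, 0 <= (2*n)^-1 * (t^+2 * n - 2*t*g) + lam*(`|bi+t| - `|bi|)) ->
  n*lam <= `|g|.
Proof.
move=> hn hl hb H.
set s := Num.sg bi.
have hs2 : s ^+ 2 = 1 by rewrite /s sqr_sg hb.
have hsb : s * `|bi| = bi by rewrite /s mulr_sg_norm.
have hbp : 0 < `|bi| by rewrite normr_gt0.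
have key : 0 <= s * g / n - lam.
  apply: (@lin_lemma _ _ (`|bi| / 2)); first by rewrite divr_ge0 // ltW.
  move=> v /andP[v0 v1].
  have := H (- s * (`|bi| * v)).
  have -> : bi + - s * (`|bi| * v) = bi * (1 - v).
    by rewrite mulNr mulrA hsb; ring.
  rewrite normrM (ger0_norm (_ : 0 <= 1 - v)); last by lra.
  have -> : (2 * n)^-1 * ((- s * (`|bi| * v)) ^+ 2 * n - 2 * (- s * (`|bi| * v)) * g) +
     lam * (`|bi| * (1 - v) - `|bi|) = (`|bi| * v) * (s * g / n - lam + v * (`|bi| / 2)).
    have -> : (- s * (`|bi| * v)) ^+ 2 = s ^+ 2 * (`|bi| * v) ^+ 2 by ring.
    rewrite hs2; field; rewrite gt_eqF //.
  by rewrite pmulr_rge0 // mulr_gt0.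
have : n * lam <= s * g.
  have h := mulr_ge0 (ltW hn) key.
  have E : n * (s * g / n - lam) = s * g - n * lam by field; rewrite gt_eqF.
  by rewrite -subr_ge0 -E.
move/le_trans; apply.
have : `|s * g| <= `|g| by rewrite normrM /s normr_sg hb mul1r.
apply: le_trans; exact: ler_norm.
Qed.

Lemma B_arith (R : realType) (n lam g Q Lb : R) : 0 < n -> 0 <= Q ->
  (forall u, 0 < u <= 1 -> 0 <= (2*n)^-1 * ((-u)^+2 * Q - 2*(-u)*g) + lam*((1-u)*Lb - Lb)) ->
  n*lam*Lb <= g.
Proof.
move=> hn hQ H.
have key : 0 <= g / n - lam * Lb.
  apply: (@lin_lemma _ _ (Q / (2*n))); first by rewrite divr_ge0 // mulr_ge0 // ltW.
  move=> u /andP[u0 u1].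
  have := H u; rewrite u0 u1 => /(_ isT).
  have -> : (2*n)^-1 * ((-u)^+2 * Q - 2*(-u)*g) + lam*((1-u)*Lb - Lb) =
     u * (g / n - lam * Lb + u * (Q / (2 * n))) by field; rewrite gt_eqF.
  by rewrite pmulr_rge0.
have h := mulr_ge0 (ltW hn) key.
have E : n * (g / n - lam * Lb) = g - n * lam * Lb by field; rewrite gt_eqF.
by rewrite -subr_ge0 -E.
Qed.

Theorem theorem2p1 (R : realType) (n p : nat)
  (X : 'M[R]_(n, p)) (y : 'cV[R]_n)
  (hy : \sum_(i < n) y i 0 = 0)
  (hXc : forall j : 'I_p, \sum_(i < n) X i j = 0)
  (hXs : forall j : 'I_p, n%:R^-1 * \sum_(i < n) (X i j) ^+ 2 = 1)
  (lam : R) (hlam0 : 0 < lam) (hlam1 : lam <= lambda_max X y)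
  (k : 'I_p) (hk : forall j : 'I_p, `|xty X y j| <= `|xty X y k|)
  (j : 'I_p)
  (hj : `|(lambda_max X y + lam) * xty X y j
           - (lambda_max X y - lam) * Num.sg (xty X y k) * lambda_max X y * xtx X j k|
        < 2 * n%:R * lam * lambda_max X y
          - (lambda_max X y - lam)
            * Num.sqrt (n%:R * sqnorm y - n%:R ^+ 2 * lambda_max X y ^+ 2))
  (b : 'cV[R]_p) (hb : is_lasso_sol X y lam b) :
  b j 0 = 0.
Proof.
have hn : (0:R) < n%:R.
  rewrite ltr0n lt0n; apply/negP => /eqP n0.
  have := hXs k; rewrite big1 ?mulr0; last by move=> i _; have := ltn_ord i; rewrite {2}n0.
  by move/eqP; rewrite eq_sym oner_eq0.
have objE : forall (d : 'cV[R]_p) (t : R), lasso_obj X y lam (b + t *: d) - lasso_obj X y lam b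
   = (2 * n%:R)^-1 * (t^+2 * dotc (X *m d) (X *m d) - 2 * t * dotc (y - X *m b) (X *m d))
     + lam * (l1norm (b + t *: d) - l1norm b).
  move=> d t; rewrite /lasso_obj !sqnormE mulmxDr -scalemxAr.
  have -> : y - (X *m b + t *: (X *m d)) = (y - X *m b) + (-t) *: (X *m d).
    by rewrite opprD addrA scaleNr.
  rewrite !dotcDl !dotcDr !dotcZl !dotcZr !dotcNl !dotcNr ?(dotcC (X *m d) y) ?(dotcC (X *m b) y) ?(dotcC (X *m d) (X *m b)).
  ring.
have pert : forall d t, 0 <= (2 * n%:R)^-1 * (t^+2 * dotc (X *m d) (X *m d) - 2 * t * dotc (y - X *m b) (X *m d))
     + lam * (l1norm (b + t *: d) - l1norm b).
  by move=> d t; rewrite -objE subr_ge0; apply: hb.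
set r := y - X *m b.
have colX : forall i, X *m delta_mx i 0 = col i X by move=> i; rewrite colE.
have hxx : forall i, dotc (col i X) (col i X) = n%:R.
  move=> i; have := hXs i.
  have -> : dotc (col i X) (col i X) = \sum_(l < n) X l i ^+ 2.
    by apply: eq_bigr => l _; rewrite !mxE expr2.
  move=> /(congr1 (fun z => n%:R * z)); rewrite mulrA mulfV ?mul1r ?mulr1 //.
  by rewrite gt_eqF.
have l1d : forall i t, l1norm (b + t *: delta_mx i 0) - l1norm b = `|b i 0 + t| - `|b i 0|.
  move=> i t; rewrite /l1norm (bigD1 i) //= [X in _ - X](bigD1 i) //= !mxE eqxx /= mulr1.
  rewrite (eq_bigr (fun l => `|b l 0|)); first by ring.
  by move=> l hl; rewrite !mxE (negbTE hl) /= mulr0 addr0.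
have hA : forall i, `|dotc r (col i X)| <= n%:R * lam.
  move=> i; apply: (@A_arith _ _ _ _ (b i 0) hn hlam0) => t.
  by have := pert (delta_mx i 0) t; rewrite colX hxx l1d.
have hC : b j 0 != 0 -> n%:R * lam <= `|dotc r (col j X)|.
  move=> hbj; apply: (@C_arith _ _ _ _ (b j 0) hn hlam0 hbj) => t.
  by have := pert (delta_mx j 0) t; rewrite colX hxx l1d.
have hB : n%:R * lam * l1norm b <= dotc r (X *m b).
  apply: (@B_arith _ n%:R lam _ (dotc (X *m b) (X *m b)) _ hn (dotc_ge0 _)) => u /andP[u0 u1].
  have := pert b (-u).
  have -> : b + (-u) *: b = (1 - u) *: b by rewrite scaleNr scalerBl scale1r.
  suff -> : l1norm ((1 - u) *: b) = (1 - u) * l1norm b by [].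
  rewrite /l1norm mulr_sumr; apply: eq_bigr => l _.
  by rewrite !mxE normrM ger0_norm // subr_ge0.
set L := lambda_max X y.
have hLk : L = `|xty X y k| / n%:R.
  have nrm : forall i, `|xty X y i / n%:R| = `|xty X y i| / n%:R.
    by move=> i; rewrite normrM normfV (gtr0_norm hn).
  apply/le_anti/andP; split.
  - apply: bigmax_le; first by rewrite divr_ge0 // ltW.
    by move=> i _; rewrite nrm ler_wpM2r // invr_ge0 ltW.
  - by rewrite -nrm /L /lambda_max (bigD1 k) //= le_max lexx.
have hLp : 0 < L by apply: lt_le_trans hlam1.
have hxk : `|xty X y k| = n%:R * L by rewrite hLk; field; rewrite gt_eqF.
have xk0 : xty X y k != 0 by rewrite -normr_gt0 hxk mulr_gt0.
set s := Num.sg (xty X y k).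
have hs : s = 1 \/ s = -1.
  rewrite /s; case: (ltrP 0 (xty X y k)) => h; first by left; rewrite gtr0_sg.
  by right; rewrite ltr0_sg // lt_neqAle xk0.
have hxyk : xty X y k = s * (n%:R * L).
  by rewrite -hxk /s mulr_sg_norm.
have hxy : forall i, dotc (col i X) y = xty X y i.
  by move=> i; apply: eq_bigr => l _; rewrite !mxE.
have hxjk : dotc (col j X) (col k X) = xtx X j k.
  by apply: eq_bigr => l _; rewrite !mxE.
have H1 : s * dotc r (col k X) <= n%:R * lam.
  have := hA k; case: hs => ->; rewrite ?mul1r ?mulN1r => h.
    exact: le_trans (ler_norm _) h.
  by apply: le_trans h; rewrite -normrN ler_norm.
have hXbr : y - r = X *m b by rewrite /r opprB addrC subrK.
have hXby : dotc (X *m b) y = \sum_(l < p) b l 0 * xty X y l.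
  rewrite /dotc /xty; under eq_bigr do rewrite mxE big_distrl /=.
  rewrite exchange_big /=; apply: eq_bigr => l _; rewrite big_distrr /=.
  by apply: eq_bigr => i _; ring.
have hXby2 : dotc (X *m b) y <= n%:R * L * l1norm b.
  rewrite hXby /l1norm mulr_sumr; apply: ler_sum => l _.
  apply: le_trans (ler_norm _) _; rewrite normrM mulrC ler_wpM2r //.
  by rewrite -hxk.
have H2 : dotc (y - r) ((lam / L) *: y - r) <= 0.
  rewrite hXbr dotcDr dotcZr dotcNr (dotcC (X *m b) r).
  have : lam / L * dotc (X *m b) y <= lam / L * (n%:R * L * l1norm b).
    by rewrite ler_wpM2l // divr_ge0 // ltW.
  have -> : lam / L * (n%:R * L * l1norm b) = n%:R * lam * l1norm b.
    by field; rewrite gt_eqF.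
  move: hB; lra.
have [a ha] : exists a, a = (L - lam) / (2 * L) by eexists.
have hL0 : L != 0 by rewrite gt_eqF.
have hlamE : lam = (1 - 2 * a) * L by rewrite ha; field.
have hc : lam / L = 1 - 2 * a by rewrite ha; field.
have ha0 : 0 <= a by rewrite ha divr_ge0 ?subr_ge0 // mulr_ge0 // ltW.
set xk := col k X.
set xj := col j X.
have hxkk : dotc xk xk = n%:R by apply: hxx.
have hxjj : dotc xj xj = n%:R by apply: hxx.
have hxky : dotc xk y = xty X y k by apply: hxy.
have hxjy : dotc xj y = xty X y j by apply: hxy.
have hxjk' : dotc xj xk = xtx X j k by apply: hxjk.
have hC' : b j 0 != 0 -> n%:R * lam <= `|dotc r xj| by apply: hC.
have H1k : s * dotc r xk <= n%:R * lam by apply: H1.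
clearbody r xk xj.
set q := (1 - a) *: y - (a * s * L) *: xk.
have Key1 : dotc (r - q) (r - q) <= a ^+ 2 * (dotc y y - n%:R * L ^+ 2).
  rewrite hc in H2.
  have H1' : 2 * a * L * (s * dotc r xk) <= 2 * a * L * (n%:R * lam).
    apply: ler_wpM2l H1k; apply: mulr_ge0; [exact: mulr_ge0 | exact: ltW].
  rewrite hlamE in H1'.
  move: H2 H1'; rewrite /q.
  rewrite !dotcDl !dotcDr !dotcNl !dotcNr ?dotcZl ?dotcZr ?dotcNl ?dotcNr ?dotcZl ?dotcZr.
  do 3 rewrite ?dotcDl ?dotcDr ?dotcNl ?dotcNr ?dotcZl ?dotcZr.
  rewrite ?(dotcC y r) ?(dotcC xk r) ?(dotcC y xk) hxkk hxky hxyk.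
  case: hs => ->; lra.
set W := n%:R * sqnorm y - n%:R ^+ 2 * L ^+ 2.
have Key2 : `|dotc xj (r - q)| <= a * Num.sqrt W.
  have cs := @cauchy_schwarz _ _ xj (r - q) (ltac:(by rewrite hxjj)).
  rewrite hxjj in cs.
  have h : dotc xj (r - q) ^+ 2 <= a ^+ 2 * W.
    apply: le_trans cs _.
    have : n%:R * dotc (r - q) (r - q) <= n%:R * (a ^+ 2 * (dotc y y - n%:R * L ^+ 2)).
      by rewrite ler_wpM2l // ltW.
    suff -> : a ^+ 2 * W = n%:R * (a ^+ 2 * (dotc y y - n%:R * L ^+ 2)) by [].
    by rewrite /W sqnormE; ring.
  rewrite -sqrtr_sqr; apply: le_trans (ler_wsqrtr h) _.
  by rewrite sqrtrM ?sqr_ge0 // sqrtr_sqr ger0_norm.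
have Key3 : dotc xj r = dotc xj q + dotc xj (r - q).
  by rewrite dotcDr dotcNr; ring.
have dq : dotc xj q = (1 - a) * xty X y j - a * s * L * xtx X j k.
  by rewrite /q dotcDr dotcNr !dotcZr hxjy hxjk'.
have E1 : (L + lam) * xty X y j - (L - lam) * s * L * xtx X j k = (2 * L) * dotc xj q.
  by rewrite dq hlamE; ring.
have E2 : 2 * n%:R * lam * L - (L - lam) * Num.sqrt W = (2 * L) * (n%:R * lam - a * Num.sqrt W).
  by rewrite hlamE; ring.
rewrite E1 E2 normrM (gtr0_norm (_ : 0 < 2 * L)) ?mulr_gt0 // ltr_pM2l ?mulr_gt0 // in hj.
apply/eqP; apply: contraT => hbj.
have := hC' hbj; rewrite (dotcC r xj) Key3 => hh.
have := ler_normD (dotc xj q) (dotc xj (r - q)).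
move: hh hj Key2; lra.
Qed.
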